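(* Let $X,X_1,X_2,\dots$ be real random variables on a probability space $(\Omega,\mathcal{F},P)$, and let $F$ and $F_n$ be the distribution functions of $X$ and $X_n$. Suppose that $F$ is locally Lipschitz continuous at each continuity point of $F$, and that $\sum_{n=1}^\infty\|X_n-X\|_\infty<\infty$. Then for every continuity point $x$ of $F$, $\sum_{n=1}^\infty |F_n(x)-F(x)|<\infty$.
   Context: The distribution function of a random variable $Y$ is $x\mapsto P(Y\le x)$. $\|\cdot\|_\infty$ denotes the essential supremum norm, i.e. the $L^\infty(P)$ norm. ''$F$ is locally Lipschitz continuous at $x$'' means that there exist constants $K\ge 0$ and $\delta>0$ such that $|F(u)-F(v)|\le K|u-v|$ for all $u,v\in(x-\delta,x+\delta)$. *)

(* Defs.v *)
From HB Require Import structures.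
From mathcomp Require Import all_boot all_order all_algebra.
From mathcomp Require Import all_classical all_reals all_analysis.
Set Implicit Arguments. Unset Strict Implicit. Unset Printing Implicit Defensive.
Import Order.TTheory GRing.Theory Num.Theory numFieldNormedType.Exports.
Local Open Scope classical_set_scope.
Local Open Scope ring_scope.

(* Distribution function of a real random variable Y: x |-> P(Y <= x),
   as a real number (P is a probability, so the value is finite). *)
Definition distrfun d (T : measurableType d) (R : realType)
  (P : probability T R) (Y : T -> R) (x : R) : R :=
  fine (P [set w | Y w <= x]).

Definition locally_lipschitz_at (R : realType) (F : R -> R) (x : R) : Prop :=
  exists K : R, 0 <= K /\ exists delta : R, 0 < delta /\
    forall u v : R, `|u - x| < delta -> `|v - x| < delta ->
      `|F u - F v| <= K * `|u - v|.

Definition Linf_norm d (T : measurableType d) (R : realType)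
  (P : probability T R) (Y : T -> R) : \bar R :=
  Lnorm P +oo%E (EFin \o Y).

(* Main.v *)
Require Import Defs.
From HB Require Import structures.
From mathcomp Require Import all_boot all_order all_algebra.
From mathcomp Require Import all_classical all_reals all_analysis.
From mathcomp Require Import lra.
Import Order.TTheory GRing.Theory Num.Theory numFieldNormedType.Exports.
Local Open Scope classical_set_scope.
Local Open Scope ring_scope.

Section helpers.
Context d (T : measurableType d) (R : realType) (P : probability T R).

Lemma mle (a : R) (Y : {RV P >-> R}) : measurable [set w | Y w <= a].
Proof.
have -> : [set w | Y w <= a] = Y @^-1` `]-oo, a] by apply/seteqP; split => w /=; rewrite in_itv.
exact: measurable_funPTI.
Qed.

Lemma fP01 (A : set T) : measurable A -> 0 <= fine (P A) <= 1.
Proof.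
move=> mA; apply/andP; split; first by apply: fine_ge0.
have : (P A <= 1)%E by exact: probability_le1.
have : P A \is a fin_num by apply: fin_num_measure.
by case: (P A) => // r _; rewrite lee_fin.
Qed.

Lemma mle_null (A B N : set T) : measurable A -> measurable B -> measurable N ->
  P N = 0%E -> A `<=` B `|` N -> fine (P A) <= fine (P B).
Proof.
move=> mA mB mN PN AB; apply: fine_le; rewrite ?in_setE; try exact: fin_num_measure.
apply: (le_trans (le_measure _ _ _ AB)); rewrite ?inE //; first exact: measurableU.
have h := measureU2 P mB mN; apply: (le_trans h); change (P B + P N <= P B)%E.
by rewrite PN adde0.
Qed.

Lemma key (X Y : {RV P >-> R}) (r x : R) :
  (\forall w \ae P, `|Y w - X w| <= r) ->
  distrfun P X (x - r) <= distrfun P Y x <= distrfun P X (x + r).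
Proof.
move=> [N [mN PN sub]]; apply/andP; split; (apply: mle_null; [exact: mle|exact: mle|exact: mN|exact: PN|]) => w /= H.
- have [h|h] := boolP (`|Y w - X w| <= r); last by right; apply: sub => /=; apply/negP.
  left; move: h; rewrite ler_norml; lra.
- have [h|h] := boolP (`|Y w - X w| <= r); last by right; apply: sub => /=; apply/negP.
  left; move: h; rewrite ler_norml; lra.
Qed.

Lemma Linf_ae (f : T -> R) (r : R) : Linf_norm P f = r%:E ->
  \forall w \ae P, `|f w| <= r.
Proof.
have P1 : (0 < P [set: T])%E by rewrite probability_setT lte01.
rewrite /Linf_norm unlock /= (ifT _ _ P1) => E.
have := ess_sup_inf.ess_sup_ge P (abse \o (EFin \o f)); rewrite E.
by apply: filterS => w /=; rewrite lee_fin.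
Qed.

End helpers.
Arguments mle {d T R P}.
Arguments fP01 {d T R} P {A}.
Arguments key {d T R P X Y r} x.
Arguments Linf_ae {d T R P f r}.

Theorem proposition3p1 (d : measure_display) (T : measurableType d)
  (R : realType) (P : probability T R)
  (X : {RV P >-> R}) (Xn : nat -> {RV P >-> R}) :
  (forall x : R, {for x, continuous (distrfun P X)} ->
     locally_lipschitz_at (distrfun P X) x) ->
  (\sum_(1 <= n <oo) Linf_norm P (fun w => (Xn n w - X w)%R) < +oo)%E ->
  forall x : R, {for x, continuous (distrfun P X)} ->
    (\sum_(1 <= n <oo) (`|distrfun P (Xn n) x - distrfun P X x|)%:E < +oo)%E.
Proof.
move=> Hlip Hsum x Hx.
have [K [K0 [del [del0 HL]]]] := Hlip x Hx.
pose C := K + del^-1.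
have di0 : 0 < del^-1 by rewrite invr_gt0.
have C0 : 0 < C by rewrite /C; lra.
have bound : forall n, ((`|distrfun P (Xn n) x - distrfun P X x|)%:E
    <= C%:E * Linf_norm P (fun w => (Xn n w - X w)%R))%E.
  move=> n.
  have L0 : (0 <= Linf_norm P (fun w => (Xn n w - X w)%R))%E by exact: Lnorm_ge0.
  case E: (Linf_norm P (fun w => (Xn n w - X w)%R)) L0 => [r| |] L0 //; last first.
    by rewrite mulry gtr0_sg // mul1e leey.
  rewrite lee_fin in L0.
  have /andP[k1 k2] := key x (Linf_ae E).
  rewrite -EFinM lee_fin.
  have f1 := fP01 P (mle x (Xn n)).
  have f2 := fP01 P (mle x X).
  rewrite /distrfun in k1 k2 f1 f2 *.
  have [hr|hr] := ltP r del.
  - have h1 := HL (x + r) x.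
    rewrite (_ : x + r - x = r) in h1; last by rewrite addrAC subrr add0r.
    rewrite subrr normr0 ger0_norm // in h1.
    have {}h1 := h1 hr del0.
    have h2 := HL x (x - r).
    rewrite (_ : x - (x - r) = r) in h2; last by rewrite opprB addrC subrK.
    rewrite (_ : x - r - x = - r) in h2; last by rewrite addrAC subrr add0r.
    rewrite subrr normr0 normrN ger0_norm // in h2.
    have {}h2 := h2 del0 hr.
    rewrite /distrfun in h1 h2.
    move: h1 h2; rewrite !ler_norml /C mulrDl => /andP[h1 h1'] /andP[h2 h2'].
    have : 0 <= del^-1 * r by rewrite mulr_ge0 // ltW.
    move: f1 f2 k1 k2 h1 h1' h2 h2'.
    set a := fine _; set b := fine _; set c := fine _; set e := fine _.
    move=> /andP[? ?] /andP[? ?] *; apply/andP; split; lra.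
  - have : 1 <= del^-1 * r by rewrite mulrC ler_pdivlMr // mul1r.
    have : 0 <= K * r by rewrite mulr_ge0.
    rewrite /C mulrDl.
    move: f1 f2; set a := fine _; set b := fine _.
    rewrite ler_norml => /andP[? ?] /andP[? ?] *; apply/andP; split; lra.
apply: (le_lt_trans (lee_nneseries (v := fun n => (C%:E *
   Linf_norm P (fun w => (Xn n w - X w)%R))%E) _ _)).
- by move=> i _ _; rewrite lee_fin normr_ge0.
- by move=> n _; exact: bound.
rewrite nneseriesZl; last by move=> i _; exact: Lnorm_ge0.
by apply: lte_mul_pinfty => //; rewrite lee_fin ltW.
Qed.
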